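(* Let $f(x,y)=x^2y+x^2+y^2-y\in\mathbb{Z}[x,y]$. Define $R^{(1)}(x,x_1)=f(x,x_1)$ and, for $n\ge2$, $R^{(n)}(x,x_n)=\mathrm{Res}_{x_{n-1}}\big(R^{(n-1)}(x,x_{n-1}),\,f(x_{n-1},x_n)\big)$, the resultant with respect to $x_{n-1}$; set $R_n(x)=R^{(n)}(x,x)$. Then for all $n\ge1$, $$R^{(n)}(x,x_n)\equiv(x^{2^n}+x_n)(x_n+1)^{2^n-1}\pmod 2,\qquad R_n(x)\equiv(x^{2^n}+x)(x+1)^{2^n-1}\pmod 2.$$
   Context: Congruences are coefficientwise congruences of polynomials with integer coefficients. *)

(* Defs.v *)
From HB Require Import structures.
From mathcomp Require Import all_boot all_order all_algebra.
Set Implicit Arguments. Unset Strict Implicit. Unset Printing Implicit Defensive.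
Import Order.TTheory GRing.Theory Num.Theory.
Local Open Scope ring_scope.

(* Bivariate integer polynomials Z[x][y]: inner variable x, outer variable y. *)
Notation bipoly := {poly {poly int}}.

Definition fxy : bipoly :=
  (('X : {poly int}) ^+ 2)%:P * 'X + (('X : {poly int}) ^+ 2)%:P + 'X ^+ 2 - 'X.

(* f(t, x_n) as a polynomial in t (= x_{n-1}) with coefficients in
   Z[x][x_n] (x_n is the outer variable 'X of bipoly). *)
Definition f_shift : {poly bipoly} :=
  'X ^+ 2 * ('X + 1 : bipoly)%:P + ('X ^+ 2 - 'X : bipoly)%:P.

(* Rsup n = R^{(n)}(x, x_n) for n >= 1 (Rsup 0 is an unused dummy = fxy).
   R^{(n)} = Res_{x_{n-1}} (R^{(n-1)}(x, x_{n-1}), f(x_{n-1}, x_n)). *)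
Fixpoint Rsup (n : nat) : bipoly :=
  match n with
  | 0 => fxy
  | m.+1 => if m is 0 then fxy
            else resultant (map_poly polyC (Rsup m)) f_shift
  end.

Definition Rdiag (n : nat) : {poly int} := (Rsup n).['X].

Definition cong2_bi (P Q : bipoly) : Prop :=
  forall i j : nat, (2 %| ((P - Q)`_i)`_j)%Z.
Definition cong2 (p q : {poly int}) : Prop :=
  forall i : nat, (2 %| (p - q)`_i)%Z.

(* Main.v *)
Require Import Defs.
From HB Require Import structures.
From mathcomp Require Import all_boot all_order all_algebra.
From mathcomp Require Import zify ring.
Set Implicit Arguments. Unset Strict Implicit. Unset Printing Implicit Defensive.
Import Order.TTheory GRing.Theory Num.Theory.
Local Open Scope ring_scope.

Section Key.
Variable K : comNzRingType.

Lemma det_castmx n n' (e : n = n') (A : 'M[K]_n) : \det (castmx (e,e) A) = \det A.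
Proof. by case: n' / e in A *; rewrite castmx_id. Qed.

Lemma det2 (A : 'M[K]_2) : \det A = A 0 0 * A 1 1 - A 0 1 * A 1 0.
Proof.
rewrite (expand_det_row _ 0) !big_ord_recl big_ord0 addr0 /cofactor !det_mx11 /=.
rewrite !mxE /= !expr0 !expr1 !mul1r mulN1r mulrN.
congr (_ * _ - _ * _); congr (A _ _); exact: val_inj.
Qed.

Lemma sum_delta n (F : 'I_n -> K) j : \sum_(l < n) F l * (l == j)%:R = F j.
Proof.
rewrite (bigD1 j) //= eqxx mulr1 big1 ?addr0 // => l /negPf ->; by rewrite mulr0.
Qed.

Definition Mres (p q : {poly K}) d : 'M[K]_(2 + d) :=
  \matrix_(i, j) (if (i < 2)%N then p`_(j - i) *+ (i <= j)%N
                  else q`_(j - (i - 2)) *+ (i - 2 <= j)%N).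

Lemma resultant_Mres (p q : {poly K}) d : size p = d.+1 -> size q = 3 ->
  resultant p q = \det (Mres p q d).
Proof.
move=> sp sq.
have e : ((size q).-1 + (size p).-1)%N = (2 + d)%N by rewrite sp sq.
rewrite /resultant -(det_castmx e); congr (\det _); apply/matrixP => i j.
rewrite castmxE Sylvester_mxE mxE /=.
case: (splitP (cast_ord (esym e) i)) => k /= hk; have {}hk : (i : nat) = _ := hk; rewrite hk.
  have -> : (k < 2)%N by have := ltn_ord k; rewrite {2}sq.
  done.
have -> : (size q).-1 = 2%N by rewrite sq.
by rewrite ltnNge leq_addr /= addKn.
Qed.


Lemma sum_delta_nat n m (F : nat -> K) :
  \sum_(l < n) (val l == m)%:R * F (val l) = (m < n)%:R * F m.
Proof.
case: (ltnP m n) => h.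
  rewrite (bigD1 (Ordinal h)) //= eqxx mul1r big1 ?addr0 ?mul1r // => l ne.
  have /negPf -> : val l != m by apply: contra ne => /eqP e; apply/eqP/val_inj.
  by rewrite mul0r.
rewrite mul0r big1 // => l _.
have /negPf -> : val l != m by apply/eqP => e; move: (ltn_ord l); rewrite e ltnNge h.
by rewrite mul0r.
Qed.

Section Det.
Variables (p q : {poly K}) (c y : K) (d : nat).
Hypotheses (sp : size p = d.+1) (sq : size q = 3) (q0 : q`_0 = c * y)
  (q1 : q`_1 = 0) (q2 : q`_2 = c).

Definition Vf (j l : nat) : K := if odd l == odd j then (-y) ^+ l./2 else 0.

Definition Umx : 'M[K]_(2 + d) :=
  \matrix_(k, j) (if (j < 2)%N then Vf j k else (k == j)%:R).

Lemma det_Umx : \det Umx = 1.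
Proof.
rewrite det_trig; last first.
  apply/is_trig_mxP => i j lt_ij; rewrite mxE /Vf.
  case: ifP => j2.
    by move: lt_ij j2; case: i j => [[|[|i]] ?] [[|[|j]] ?].
  have /negPf -> : i != j by rewrite -val_eqE /= ltn_eqF.
  by [].
rewrite big1 // => i _; rewrite mxE /Vf !eqxx.
case: ifP => // i2.
by move: i2; case: i => [[|[|i]] ?].
Qed.

Lemma qcoef (k l : nat) :
  q`_(l - k) *+ (k <= l)%N = (l == k)%:R * (c * y) + (l == (k + 2)%N)%:R * c.
Proof.
case: (ltnP l k) => h.
  by rewrite mulr0n (ltn_eqF h) (ltn_eqF (ltn_addr 2 h)) !mul0r addr0.
have [m ->] : exists m, l = (k + m)%N by exists (l - k)%N; rewrite subnKC.
rewrite mulr1n addKn -{2}(addn0 k) !eqn_add2l.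
case: m => [|[|[|m]]]; rewrite /= ?q0 ?q1 ?q2 ?mul1r ?mul0r ?addr0 ?add0r //.
by rewrite nth_default // sq.
Qed.

Definition Ep := \sum_(l < d.+1) (if odd l then 0 else p`_l * (-y) ^+ l./2).
Definition Op := \sum_(l < d.+1) (if odd l then p`_l * (-y) ^+ l./2 else 0).

Lemma det_Mres : \det (Mres p q d) = c ^+ d * (Ep ^+ 2 + y * Op ^+ 2).
Proof.
rewrite -[\det (Mres _ _ _)]mulr1 -det_Umx -det_mulmx.
set MU := Mres p q d *m Umx.
have dl0 : dlsubmx MU = 0.
  apply/matrixP => k j; rewrite !mxE.
  under eq_bigr => l _ do rewrite !mxE /= addKn (ltn_ord j) qcoef mulrDl -!mulrA.
  rewrite big_split /= (sum_delta_nat _ _ (fun l => c * (y * Vf j l))).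
  rewrite (sum_delta_nat _ _ (fun l => c * Vf j l)).
  have h1 : (k < 2 + d)%N by rewrite ltn_addl.
  have h2 : (k + 2 < 2 + d)%N by rewrite addnC ltn_add2l.
  rewrite h1 h2 /Vf addn2 /= negbK !mul1r.
  case: ifP => _; last by rewrite !mulr0 addr0.
  rewrite exprS; ring.
have dr : \det (drsubmx MU) = c ^+ d.
  have drE i j : drsubmx MU i j = q`_(2 + j - i) *+ (i <= 2 + j)%N.
    rewrite !mxE; under eq_bigr => l _ do rewrite [Umx _ _]mxE /=.
    by rewrite sum_delta mxE /= addKn.
  rewrite det_trig; last first.
    apply/is_trig_mxP => i j lt_ij; rewrite drE nth_default ?mul0rn // sq.
    lia.
  rewrite (eq_bigr (fun _ => c)) => [|i _]; first by rewrite prodr_const card_ord.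
  by rewrite drE addnK leq_addl q2.
have ul : \det (ulsubmx MU) = Ep ^+ 2 + y * Op ^+ 2.
  have ulE i j : ulsubmx MU i j = \sum_(l < 2 + d) p`_(l - i) *+ (i <= l)%N * Vf j l.
    by rewrite !mxE; apply eq_bigr => l _; rewrite !mxE /= (ltn_ord i) (ltn_ord j).
  have S0 j : \sum_(l < 2 + d) p`_(l - 0) *+ (0 <= l)%N * Vf j l = \sum_(l < d.+1) p`_l * Vf j l.
    rewrite big_ord_recr /= nth_default ?sp // mul0rn mul0r addr0.
    by apply eq_bigr => l _; rewrite subn0.
  have S1 j : \sum_(l < 2 + d) p`_(l - 1) *+ (1 <= l)%N * Vf j l = \sum_(l < d.+1) p`_l * Vf j l.+1.
    rewrite big_ord_recl /= mulr0n mul0r add0r.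
    by apply eq_bigr => l _; rewrite /bump /= subn1 /=.
  rewrite det2 !ulE /= !S0 !S1.
  have -> : \sum_(l < d.+1) p`_l * Vf 0 l = Ep.
    by apply eq_bigr => l _; rewrite /Vf /=; case: (odd l); rewrite ?mulr0.
  have -> : \sum_(l < d.+1) p`_l * Vf 1 l = Op.
    by apply eq_bigr => l _; rewrite /Vf /=; case: (odd l); rewrite ?mulr0.
  have -> : \sum_(l < d.+1) p`_l * Vf 1 l.+1 = Ep.
    apply eq_bigr => l _; rewrite /Vf /= uphalf_half.
    by case: (odd l); rewrite /= ?mulr0 ?add0n.
  have -> : \sum_(l < d.+1) p`_l * Vf 0 l.+1 = - y * Op.
    rewrite /Op mulr_sumr; apply eq_bigr => l _; rewrite /Vf /= uphalf_half.
    by case: (odd l); rewrite /= ?mulr0 ?add1n ?exprS //; ring.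
  ring.
by rewrite -(submxK MU) dl0 det_ublock ul dr mulrC.
Qed.

End Det.
End Key.

Lemma frob_EO (K : comNzRingType) (h2 : 2%N \in [pchar K]) (p : {poly K}) (y : K) d :
  Ep p y d ^+ 2 + y * Op p y d ^+ 2 = \sum_(l < d.+1) p`_l ^+ 2 * y ^+ l.
Proof.
have sq2 x : x ^+ 2 = pFrobenius_aut h2 x by rewrite pFrobenius_autE.
rewrite /Ep /Op [in LHS]sq2 [X in _ + _ * X]sq2 !rmorph_sum mulr_sumr -big_split.
apply eq_bigr => l _ /=; rewrite -!sq2.
have e : y ^+ l = y ^+ (odd l + (l./2).*2) by rewrite odd_double_half.
set z := (-y) ^+ l./2.
have hz : z ^+ 2 = y ^+ (l./2).*2 by rewrite /z -exprM mulnC exprM sqrrN -exprM mul2n.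
rewrite e; case: (odd l) => /=.
  rewrite expr0n /= add0r add1n (exprS y) -hz; ring.
rewrite expr0n /= mulr0 addr0 add0n -hz; ring.
Qed.

Notation F2 := ('F_2).
Notation KF := {poly {poly 'F_2}}.

Lemma h2F : 2%N \in [pchar F2].
Proof. exact: pchar_Fp. Qed.
Lemma h2P : 2%N \in [pchar {poly F2}].
Proof. by rewrite pchar_poly h2F. Qed.
Lemma h2K : 2%N \in [pchar KF].
Proof. by rewrite !pchar_poly h2F. Qed.

Definition Tm (m : nat) : KF :=
  ((('X : {poly F2}) ^+ (2 ^ m))%:P + 'X) * ('X + 1) ^+ (2 ^ m - 1).

Definition fF : {poly KF} :=
  'X ^+ 2 * ('X + 1 : KF)%:P + ('X ^+ 2 - 'X : KF)%:P.

Lemma XaddC1 (R : nzRingType) : ('X + 1 : {poly R}) = 'X - (-1)%:P.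
Proof. by rewrite rmorphN rmorph1 opprK. Qed.

Lemma size_Tm m : size (Tm m) = (2 ^ m).+1.
Proof.
rewrite /Tm [_%:P + 'X]addrC size_monicM ?monicXaddC //; last first.
  by rewrite -size_poly_eq0 XaddC1 size_exp_XsubC.
rewrite XaddC1 size_exp_XsubC size_XaddC /=.
have := expn_gt0 2 m; lia.
Qed.

Lemma size_fF : size fF = 3%N.
Proof.
have a0 : ('X + 1 : KF) != 0 by rewrite -size_poly_eq0 XaddC1 size_XsubC.
rewrite /fF size_addl mulrC mul_polyC size_scale // ?size_polyXn //.
by apply: leq_ltn_trans (size_polyC_leq1 _) _.
Qed.

Lemma fF_coef i : fF`_i = if i == 0%N then ('X + 1) * 'X
   else if i == 2%N then 'X + 1 else 0.
Proof.
have two0 : (2%:R : KF) = 0 := pcharf0 h2K.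
rewrite /fF coefD coefMC coefXn coefC.
case: i => [|[|[|i]]] /=; rewrite ?mul0r ?mul1r ?addr0 ?add0r //.
by transitivity (('X + 1) * 'X - 'X * 2%:R : KF); [ring | rewrite two0 mulr0 subr0].
Qed.

Lemma poly_wide (R : nzRingType) (S : {poly R}) n : (size S <= n)%N ->
  \sum_(l < n) S`_l *: 'X^l = S.
Proof.
move=> h; rewrite -poly_def; apply/polyP => i; rewrite coef_poly.
by case: ltnP => // h'; rewrite nth_default // (leq_trans h h').
Qed.

Lemma key_res m : resultant (map_poly polyC (Tm m)) fF = Tm m.+1.
Proof.
set d := (2 ^ m)%N.
have sp : size (map_poly polyC (Tm m)) = d.+1 by rewrite size_map_polyC size_Tm.
have q0 : fF`_0 = ('X + 1) * 'X by rewrite fF_coef.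
have q1 : fF`_1 = 0 by rewrite fF_coef.
have q2 : fF`_2 = 'X + 1 by rewrite fF_coef.
rewrite (resultant_Mres sp size_fF) (det_Mres sp size_fF q0 q1 q2) (frob_EO h2K).
set S := map_poly (pFrobenius_aut h2P) (Tm m).
have -> : \sum_(l < d.+1) (map_poly polyC (Tm m))`_l ^+ 2 * 'X ^+ l = S.
  rewrite -[RHS](@poly_wide _ _ d.+1); last first.
    by rewrite /S (leq_trans (size_poly _ _)) // size_Tm.
  apply eq_bigr => l _; rewrite coef_map /= -rmorphXn mul_polyC /S coef_map /=.
  by rewrite pFrobenius_autE.
have eS : S = ((('X : {poly F2}) ^+ (2 ^ m.+1))%:P + 'X) * ('X + 1) ^+ (2 ^ m - 1).
  rewrite /S /Tm rmorphM; congr (_ * _).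
    rewrite rmorphD /= map_polyC map_polyX /= pFrobenius_autE -exprM expnS mulnC //.
  by rewrite rmorphXn rmorphD /= map_polyX rmorph1.
rewrite eS /Tm.
have -> : (2 ^ m.+1 - 1 = d + (d - 1))%N by have := expn_gt0 2 m; rewrite expnS -/d; lia.
rewrite exprD; ring.
Qed.

Section SizeRes.
Variable A : comNzRingType.

Lemma size_map_leq (R S : nzRingType) (f : {additive R -> S}) (p : {poly R}) :
  (size (map_poly f p) <= size p)%N.
Proof.
by apply/leq_sizeP => j hj; rewrite coef_map nth_default // raddf0.
Qed.

Lemma size_prod_le (n : nat) (F : 'I_n -> {poly A}) (w : 'I_n -> nat) :
  (forall i, size (F i) <= (w i).+1)%N -> (size (\prod_i F i)%R <= (\sum_i w i).+1)%N.
Proof.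
move=> hF; apply: (big_rec2 (fun (P : {poly A}) (S : nat) => is_true (size P <= S.+1)%N)).
  by rewrite size_poly1.
move=> i y1 y2 _ h; have := size_polyMleq (F i) y1; have := hF i; lia.
Qed.

Lemma size_res_le (p q : {poly {poly A}}) :
  (forall i, size (p`_i)%R <= 1)%N -> (forall i, size (q`_i)%R <= 3)%N ->
  (size (resultant p q) <= (2 * (size p).-1).+1)%N.
Proof.
move=> hp hq; rewrite /resultant /determinant.
apply: leq_trans (size_sum _ _ _) _; apply/bigmax_leqP => s _.
rewrite size_Msign.
pose w (i : 'I_((size q).-1 + (size p).-1)) :=
  match split i with inl _ => 0%N | inr _ => 2%N end.
have -> : (2 * (size p).-1 = \sum_i w i)%N.
  rewrite big_split_ord /= big1 ?add0n => [|i _]; last first.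
    by rewrite /w (unsplitK (inl _ i) : split (lshift _ i) = _).
  rewrite (eq_bigr (fun _ => 2%N)) => [|i _]; last first.
    by rewrite /w (unsplitK (inr _ i) : split (rshift _ i) = _).
  by rewrite big_const_ord iter_addn_0 mulnC.
have hmb (x : {poly A}) (b : bool) : (size (x *+ b) <= size x)%N.
  by case: b; rewrite ?mulr1n ?mulr0n ?size_poly0.
apply: size_prod_le => i; rewrite Sylvester_mxE /w.
case: (split i) => k; apply: leq_trans (hmb _ _) _; [exact: leq_trans (hp _) _ | exact: hq].
Qed.

End SizeRes.

Notation phi := ( *~%R (1 : 'F_2)).
Notation psi := (map_poly (map_poly phi)).

Lemma psi_cong (P Q : bipoly) : psi P = psi Q -> cong2_bi P Q.
Proof.
move=> e i j; rewrite (dvdz_pcharf h2F).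
have : (psi (P - Q))`_i`_j = 0 by rewrite rmorphB /= e subrr coef0 coef0.
by rewrite !coef_map /= => ->.
Qed.

Lemma phi_cong (P Q : {poly int}) : map_poly phi P = map_poly phi Q -> cong2 P Q.
Proof.
move=> e i; rewrite (dvdz_pcharf h2F).
have : (map_poly phi (P - Q))`_i = 0 by rewrite rmorphB /= e subrr coef0.
by rewrite !coef_map /= => ->.
Qed.

Lemma psi_target n :
  psi (((('X : {poly int}) ^+ (2 ^ n))%:P + 'X) * ('X + 1) ^+ (2 ^ n - 1)) = Tm n.
Proof.
rewrite /Tm rmorphM; congr (_ * _).
  by rewrite rmorphD /= map_polyC map_polyX /= rmorphXn /= map_polyX.
by rewrite rmorphXn rmorphD /= map_polyX rmorph1.
Qed.

Lemma lead_map (R S : nzRingType) (g : {rmorphism R -> S}) (p : {poly R}) :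
  size (map_poly g p) = size p -> lead_coef (map_poly g p) = g (lead_coef p).
Proof. by move=> h; rewrite !lead_coefE h coef_map. Qed.

Lemma f_shift_coef i : f_shift`_i = if i == 0%N then 'X ^+ 2 - 'X
   else if i == 2%N then 'X + 1 else 0.
Proof.
rewrite /f_shift coefD coefMC coefXn coefC.
by case: i => [|[|[|i]]] /=; rewrite ?mul0r ?mul1r ?addr0 ?add0r.
Qed.

Lemma psi_fshift : map_poly psi f_shift = fF.
Proof.
rewrite /f_shift /fF rmorphD rmorphM rmorphXn /= map_polyX !map_polyC /=.
by rewrite rmorphD rmorphB rmorphXn /= map_polyX rmorph1.
Qed.

Lemma size_fshift_coef i : (size (f_shift`_i)%R <= 3)%N.
Proof.
rewrite f_shift_coef; case: ifP => _.
  by rewrite size_polyDl ?size_polyN size_polyXn ?size_polyX.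
case: ifP => _; last by rewrite size_poly0.
by rewrite XaddC1 size_XsubC.
Qed.

Lemma step m : (1 <= m)%N -> size (Rsup m) = (2 ^ m).+1 -> psi (Rsup m) = Tm m ->
  size (Rsup m.+1) = (2 ^ m.+1).+1 /\ psi (Rsup m.+1) = Tm m.+1.
Proof.
case: m => // m _ sR eR.
have -> : Rsup m.+2 = resultant (map_poly polyC (Rsup m.+1)) f_shift by [].
have sf : size f_shift = 3%N.
  apply/anti_leq/andP; split; last by rewrite -size_fF -psi_fshift size_map_leq.
  by apply/leq_sizeP => j hj; rewrite f_shift_coef; case: j hj => [|[|[|j]]].
have lf : psi (lead_coef f_shift) != 0.
  rewrite -lead_map; last by rewrite psi_fshift size_fF sf.
  by rewrite psi_fshift lead_coefE size_fF fF_coef /= -size_poly_eq0 XaddC1 size_XsubC.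
have lR : psi (lead_coef (map_poly polyC (Rsup m.+1))) != 0.
  rewrite lead_map ?size_map_polyC // map_polyC /= polyC_eq0 -lead_map; last first.
    by rewrite eR size_Tm sR.
  by rewrite eR lead_coef_eq0 -size_poly_eq0 size_Tm.
have eres : psi (resultant (map_poly polyC (Rsup m.+1)) f_shift) = Tm m.+2.
  rewrite map_resultant // psi_fshift -key_res -eR; congr (resultant _ _).
  by apply/polyP => i; rewrite !coef_map /= map_polyC.
split => //.
apply/anti_leq/andP; split.
  have hp i : (size ((map_poly polyC (Rsup m.+1))`_i)%R <= 1)%N.
    by rewrite coef_map size_polyC_leq1.
  apply: leq_trans (size_res_le hp size_fshift_coef) _.
  by rewrite size_map_polyC sR /= (expnS 2 m.+1).
by rewrite -(size_Tm m.+2) -eres size_map_leq.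
Qed.

Lemma base : size (Rsup 1) = (2 ^ 1).+1 /\ psi (Rsup 1) = Tm 1.
Proof.
have two0 : (2%:R : KF) = 0 := pcharf0 h2K.
have e : psi (Rsup 1) = Tm 1.
  rewrite /= /fxy /Tm expn1 subn1 /= expr1.
  rewrite !rmorphB !rmorphD !rmorphM /= !map_polyC /= !map_polyX.
  apply/eqP; rewrite -subr_eq0; apply/eqP.
  transitivity ('X * (- 2%:R) : KF); first ring.
  by rewrite two0 oppr0 mulr0.
split => //; apply/anti_leq/andP; split; last by rewrite -(size_Tm 1) -e size_map_leq.
apply/leq_sizeP => j hj; rewrite /= /fxy.
rewrite !(coefD, coefB, coefCM, coefXn, coefX, coefC).
rewrite ?(coefD, coefB, coefCM, coefXn, coefX, coefC, coefN).
by case: j hj => [|[|[|j]]] //= _; rewrite ?mulr0 ?addr0 ?subr0 ?oppr0.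
Qed.

Theorem proposition14 (n : nat) : (1 <= n)%N ->
  cong2_bi (Rsup n)
    (((('X : {poly int}) ^+ (2 ^ n))%:P + 'X) * ('X + 1) ^+ (2 ^ n - 1))
  /\
  cong2 (Rdiag n) (('X ^+ (2 ^ n) + 'X) * ('X + 1) ^+ (2 ^ n - 1)).
Proof.
move=> hn.
have [sR eR] : size (Rsup n) = (2 ^ n).+1 /\ psi (Rsup n) = Tm n.
  elim: n hn => // [] [|m] IH _; first exact: base.
  by have [s e] := IH isT; apply: step.
split; first by apply: psi_cong; rewrite eR psi_target.
apply: phi_cong; rewrite /Rdiag -horner_map /= map_polyX eR.
rewrite /Tm !rmorphM !rmorphD /= !rmorphXn /= !rmorphD /= !map_polyX rmorph1.
by rewrite !(hornerM, hornerD, horner_exp, hornerC, hornerX, hornerXn, hornerE).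
Qed.
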